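(* Let $t\ge 3$ and let $\mathcal{H}$ be an $n$-vertex $3$-uniform hypergraph that does not contain $K_{2,t}$ as a trace. Let $A$ be the set of edges of $\mathcal{H}$ containing at least one pair of vertices whose co-degree in $\mathcal{H}$ is $1$, and let $B=\mathcal{H}\setminus A$. For a vertex $x$, let $N_1(x)=\{z: \exists e\in B,\ \{x,z\}\subseteq e\}$ and $N_2(x)=\{z\notin N_1(x)\cup\{x\}: \exists e\in B,\ z\in e,\ e\cap N_1(x)\neq\emptyset\}$. Fix a vertex $v$, and for $u\in N_1(v)$ let $E_u=\{e\in B: e\cap N_1(v)=\{u\}\}$ and $V_u=\{w\in N_2(v): \exists e\in E_u,\ w\in e\}$. If $\{v,u,w\}\in B$ is any edge containing $v$, then $|V_u\cap V_w|\le (t-1)(6t-2)$.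
   Context: A hypergraph $\mathcal{H}$ contains a graph $F$ (vertices $v_1,\dots,v_p$, edges $e_1,\dots,e_q$) as a trace if there exist distinct vertices $w_1,\dots,w_p\in V(\mathcal{H})$ and distinct edges $f_1,\dots,f_q\in E(\mathcal{H})$ such that whenever $e_i=v_\alpha v_\beta$, $f_i\cap\{w_1,\dots,w_p\}=\{w_\alpha,w_\beta\}$. The co-degree of a pair $\{x,y\}$ in $\mathcal{H}$ is the number of edges of $\mathcal{H}$ containing $\{x,y\}$. $\mathcal{H}\setminus A$ denotes the hypergraph on $V(\mathcal{H})$ with edge set $E(\mathcal{H})\setminus A$. *)

(* Defs.v *)
From mathcomp Require Import all_boot.
Set Implicit Arguments. Unset Strict Implicit. Unset Printing Implicit Defensive.

Definition uniform (T : finType) (k : nat) (H : {set {set T}}) : Prop :=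
  forall e, e \in H -> #|e| = k.

(* A graph F with vertex type V and edge type E, each edge i having the
   (distinct) endpoints (ends i).1 and (ends i).2.  H contains F as a trace
   if there are injective maps w : V -> T and f : E -> {set T} with
   f i \in H and f i :&: w(V) = {w a, w b} where ends i = (a,b). *)
Definition contains_trace (T V E : finType) (ends : E -> V * V)
  (H : {set {set T}}) : Prop :=
  exists (w : V -> T) (f : E -> {set T}),
    [/\ injective w, injective f,
        forall i, f i \in H &
        forall i, f i :&: (w @: [set: V]) = [set w (ends i).1; w (ends i).2]].

Definition K2t_ends (t : nat) (i : 'I_2 * 'I_t) : ('I_2 + 'I_t) * ('I_2 + 'I_t) :=
  (inl i.1, inr i.2).

Definition contains_K2t_trace (T : finType) (t : nat) (H : {set {set T}}) : Prop :=
  @contains_trace T ('I_2 + 'I_t)%type ('I_2 * 'I_t)%type (@K2t_ends t) H.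

Definition codeg (T : finType) (H : {set {set T}}) (x y : T) : nat :=
  #|[set e in H | (x \in e) && (y \in e)]|.

Definition setA (T : finType) (H : {set {set T}}) : {set {set T}} :=
  [set e in H | [exists x, exists y,
     [&& x != y, x \in e, y \in e & codeg H x y == 1]]].

Definition setB (T : finType) (H : {set {set T}}) : {set {set T}} :=
  H :\: setA H.

Definition N1 (T : finType) (H : {set {set T}}) (x : T) : {set T} :=
  [set z | (z != x) && [exists e in setB H, (x \in e) && (z \in e)]].

Definition N2 (T : finType) (H : {set {set T}}) (x : T) : {set T} :=
  [set z | (z \notin N1 H x) && (z != x) &&
     [exists e in setB H, (z \in e) && (e :&: N1 H x != set0)]].

Definition Eu (T : finType) (H : {set {set T}}) (v u : T) : {set {set T}} :=
  [set e in setB H | e :&: N1 H v == [set u]].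

Definition Vu (T : finType) (H : {set {set T}}) (v u : T) : {set T} :=
  [set w in N2 H v | [exists e in Eu H v u, w \in e]].

(* Main.v *)
Require Import Defs.
From mathcomp Require Import all_boot zify.
Set Implicit Arguments. Unset Strict Implicit. Unset Printing Implicit Defensive.
Lemma card_sep (T : finType) (S : {set T}) (P : pred T) :
  #|[set y in S | P y]| = \sum_(y in S) (P y : nat).
Proof.
rewrite -sum1_card big_mkcond [RHS]big_mkcond /=.
apply: eq_bigr => y _; rewrite !inE; by case: (y \in S); case: (P y).
Qed.

Lemma indep (T : finType) (N : T -> {set T}) (k : nat) (S : {set T}) :
  (forall x, x \in S -> #|N x :&: S| <= 2) -> 5 * k < #|S| ->
  exists X : {set T}, [/\ X \subset S, #|X| = k.+1 &
     forall a b, a \in X -> b \in X -> a != b -> b \notin N a].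
Proof.
elim: k S => [|k IH] S HN HS.
  have [x xS] : exists x, x \in S by apply/card_gt0P; lia.
  exists [set x]; split; [by rewrite sub1set | by rewrite cards1 |].
  by move=> a b; rewrite !inE => /eqP-> /eqP->; rewrite eqxx.
pose inS x := [set y in S | x \in N y].
have Hin : \sum_(x in S) #|inS x| <= 2 * #|S|.
  have -> : \sum_(x in S) #|inS x| = \sum_(y in S) #|N y :&: S|.
    rewrite (eq_bigr (fun x => \sum_(y in S) ((x \in N y) : nat))); last first.
      by move=> x _; rewrite /inS card_sep.
    rewrite exchange_big /=; apply: eq_bigr => y _.
    rewrite -card_sep; apply: eq_card => z; rewrite !inE andbC //.
  rewrite mulnC -sum_nat_const; exact: leq_sum.
have Hout : \sum_(x in S) #|N x :&: S| <= 2 * #|S|.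
  rewrite mulnC -sum_nat_const; exact: leq_sum.
have : [exists x in S, #|N x :&: S| + #|inS x| <= 4].
  apply/contraT; rewrite negb_exists_in => /forall_inP Hall.
  have : \sum_(x in S) 5 <= \sum_(x in S) (#|N x :&: S| + #|inS x|).
    by apply: leq_sum => x xS; have := Hall x xS; rewrite -ltnNge.
  rewrite big_split sum_nat_const /=; lia.
case/exists_inP => x xS Hx.
pose R := x |: ((N x :&: S) :|: inS x).
pose S' := S :\: R.
have HR : #|R| <= 5.
  rewrite /R cardsU1 cardsU; lia.
have HS' : 5 * k < #|S'|.
  rewrite /S' cardsD.
  have : #|S :&: R| <= #|R| by apply: subset_leq_card; exact: subsetIr.
  lia.
have HN' : forall y, y \in S' -> #|N y :&: S'| <= 2.
  move=> y yS'; have yS : y \in S by move: yS'; rewrite inE => /andP[].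
  apply: leq_trans (HN y yS); apply: subset_leq_card; apply: setIS; exact: subsetDl.
have [X' [sub card ind]] := IH S' HN' HS'.
have xX' : x \notin X'.
  apply/negP => /(subsetP sub); rewrite /S' inE /R !inE eqxx; by [].
exists (x |: X'); split.
- rewrite subUset sub1set xS /=; apply: subset_trans sub _; exact: subsetDl.
- by rewrite cardsU1 xX' card.
- move=> a b; rewrite !in_setU1 => /orP[/eqP->|aX] /orP[/eqP->|bX].
  + by rewrite eqxx.
  + move=> _; have := subsetP sub b bX; rewrite /S' /R !inE.
    case/andP => H1 H2; apply/negP => bN; move: H1; rewrite bN H2 /=.
    by rewrite orbT.
  + move=> _; have := subsetP sub a aX; rewrite /S' /R !inE.
    case/andP => H1 H2; apply/negP => xN; move: H1; rewrite xN H2 /=.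
    by rewrite !orbT.
  + exact: ind.
Qed.
Definition pk (T : finType) (H : {set {set T}}) (v a x : T) : {set T} :=
  odflt set0 [pick e in Eu H v a | x \in e].

Lemma pkP (T : finType) (H : {set {set T}}) (v a x : T) :
  x \in Vu H v a -> pk H v a x \in Eu H v a /\ x \in pk H v a x.
Proof.
rewrite /Vu inE => /andP[_ /exists_inP[e eE xe]].
rewrite /pk; case: pickP => [e' /andP[H1 H2]|/(_ e)]; first by [].
by rewrite eE xe.
Qed.

Lemma EuP (T : finType) (H : {set {set T}}) (v a e : T) (E : {set T}) :
  E \in Eu H v a -> [/\ E \in H, a \in E & forall z, z \in E -> z \in N1 H v -> z = a].
Proof.
rewrite /Eu inE => /andP[EB /eqP EN].
have EH : E \in H by move: EB; rewrite /setB inE => /andP[].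
split => //.
  have : a \in E :&: N1 H v by rewrite EN set11.
  by rewrite inE => /andP[].
move=> z zE zN; have : z \in E :&: N1 H v by rewrite inE zE zN.
by rewrite EN inE => /eqP.
Qed.

Lemma VuN1 (T : finType) (H : {set {set T}}) (v a x : T) :
  x \in Vu H v a -> x \notin N1 H v.
Proof. by rewrite /Vu /N2 !inE => /andP[/andP[/andP[]]]. Qed.

Lemma I2 (i : 'I_2) : i = ord0 \/ i = ord_max.
Proof. case: i => [[|[|n]] Hi]; [left|right|by []]; exact: val_inj. Qed.

Theorem mainTheorem6 (T : finType) (t : nat) (H : {set {set T}}) :
  3 <= t ->
  uniform 3 H ->
  ~ contains_K2t_trace t H ->
  forall v u w : T, [set v; u; w] \in setB H ->
    #|Vu H v u :&: Vu H v w| <= (t - 1) * (6 * t - 2).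
Proof.
move=> t3 unif noK v u w eB.
have eH : [set v; u; w] \in H by move: eB; rewrite /setB inE => /andP[].
have c3 := unif _ eH.
have neq : forall a b c : T, a = b \/ a = c \/ b = c -> #|[set a; b; c]| <= 2.
  move=> a b c hh.
  have : [set a; b; c] \subset [set a; c] \/ [set a; b; c] \subset [set a; b].
    case: hh => [->|[->|->]]; [left|right|right]; apply/subsetP => z;
      rewrite !inE; by case/orP => [/orP[]|] ->; rewrite ?orbT.
  by case=> /subset_leq_card; rewrite cards2 => h; apply: leq_trans h _; case: (_ != _).
have vu : v != u by apply/eqP => h; have := neq v u w (or_introl h); rewrite c3.
have vw : v != w by apply/eqP => h; have := neq v u w (or_intror (or_introl h)); rewrite c3.
have uw : u != w by apply/eqP => h; have := neq v u w (or_intror (or_intror h)); rewrite c3.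
have uN1 : u \in N1 H v.
  rewrite /N1 inE eq_sym vu /=; apply/exists_inP; exists [set v; u; w] => //.
  by rewrite !inE !eqxx !orbT.
have wN1 : w \in N1 H v.
  rewrite /N1 inE eq_sym vw /=; apply/exists_inP; exists [set v; u; w] => //.
  by rewrite !inE !eqxx !orbT.
set S := Vu H v u :&: Vu H v w.
pose N x := (pk H v u x :\: [set x; u]) :|: (pk H v w x :\: [set x; w]).
have HN : forall x, x \in S -> #|N x :&: S| <= 2.
  move=> x; rewrite inE => /andP[xu xw].
  have [E1 x1] := pkP xu; have [E2 x2] := pkP xw.
  have [H1 u1 _] := EuP u E1; have [H2 w2 _] := EuP u E2.
  have xnu : x != u by apply/eqP => h; move: (VuN1 xu); rewrite h uN1.
  have xnw : x != w by apply/eqP => h; move: (VuN1 xu); rewrite h wN1.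
  apply: leq_trans (subset_leq_card (subsetIl _ _)) _.
  rewrite cardsU !cardsD (unif _ H1) (unif _ H2).
  have -> : pk H v u x :&: [set x; u] = [set x; u].
    by apply/setIidPr; apply/subsetP => z; rewrite !inE => /orP[]/eqP->.
  have -> : pk H v w x :&: [set x; w] = [set x; w].
    by apply/setIidPr; apply/subsetP => z; rewrite !inE => /orP[]/eqP->.
  rewrite !cards2 xnu xnw /=; apply: leq_trans (leq_subr _ _) _; by [].
rewrite leqNgt; apply/negP => big.
have b5 : 5 * t.-1 < #|S|.
  apply: leq_ltn_trans big; rewrite mulnC; apply: leq_mul => //; lia.
clear big.
have [X [XS cX ind]] := indep HN b5.
have ct : #|X| = t by rewrite cX prednK //; lia.
pose xs (j : 'I_t) : T := enum_val (cast_ord (esym ct) j).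
have xsX : forall j, xs j \in X by move=> j; exact: enum_valP.
have xsS : forall j, xs j \in S by move=> j; exact: (subsetP XS).
have xsI : injective xs.
  by move=> j j' /enum_val_inj /cast_ord_inj.
pose wm (p : 'I_2 + 'I_t) : T :=
  match p with inl i => if i == ord0 then u else w | inr j => xs j end.
pose f (p : 'I_2 * 'I_t) : {set T} := pk H v (wm (inl p.1)) (xs p.2).
have SN1 : forall x, x \in S -> x \notin N1 H v.
  by move=> x; rewrite inE => /andP[/VuN1].
have F1 : forall i x, x \in S ->
    pk H v (wm (inl i)) x \in Eu H v (wm (inl i)) /\ x \in pk H v (wm (inl i)) x.
  move=> i x; rewrite inE => /andP[xu xw]; rewrite /wm.
  by case: (I2 i) => ->; [exact: pkP| exact: pkP].
have F2 : forall i, wm (inl i) \in N1 H v.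
  by move=> i; rewrite /wm; case: (I2 i) => ->.
have F3 : forall i i', wm (inl i) = wm (inl i') -> i = i'.
  move=> i i'; rewrite /wm; case: (I2 i) => ->; case: (I2 i') => -> //= h.
  - by move: uw; rewrite h eqxx.
  - by move: uw; rewrite h eqxx.
have F4 : forall i x y, x \in X -> y \in X -> x != y ->
    y \notin pk H v (wm (inl i)) x.
  move=> i x y xX yX xy; have := ind x y xX yX xy.
  have yS := subsetP XS y yX; have yN := SN1 y yS.
  have yu : y != u by apply/eqP => h; move: yN; rewrite h uN1.
  have yw : y != w by apply/eqP => h; move: yN; rewrite h wN1.
  rewrite /N /wm; case: (I2 i) => -> /=; rewrite !inE (eq_sym y x) (negbTE xy) /= (negbTE yu) (negbTE yw) /=;
    by case: (y \in _); case: (y \in _).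
apply: noK; exists wm, f; split.
- case=> [i|j] [i'|j'] /=.
  + by move/F3 ->.
  + move=> h; have := SN1 _ (xsS j'); by rewrite -h F2.
  + move=> h; have := SN1 _ (xsS j); by rewrite h F2.
  + by move/xsI ->.
- case=> i j [i' j']; rewrite /f /=.
  have [E1 _] := F1 i _ (xsS j); have [E2 x2] := F1 i' _ (xsS j').
  have [_ a1 P1] := EuP u E1; have [_ a2 P2] := EuP u E2.
  move=> h.
  have ii : i = i'.
    apply: F3; symmetry; apply: P1; [by rewrite h | exact: F2].
  subst i'; congr (_, _).
  apply: xsI; apply/eqP; apply/negPn/negP => ne.
  by have := F4 i _ _ (xsX j) (xsX j') ne; rewrite h x2.
- case=> i j; rewrite /f /=.
  by have [E1 _] := F1 i _ (xsS j); have [? _ _] := EuP u E1.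
- case=> i j; rewrite /f /K2t_ends /=.
  have [E1 x1] := F1 i _ (xsS j).
  have [_ a1 P1] := EuP u E1.
  apply/setP => z; rewrite in_setI; apply/andP/set2P.
  + case=> zf /imsetP[p _ zp]; subst z; case: p zf => [i'|j'] zf.
    * left; exact: P1 zf (F2 i').
    * right; apply/eqP; apply/negPn/negP => ne.
      by have := F4 i _ _ (xsX j) (xsX j'); rewrite eq_sym ne zf => /(_ isT).
  + case=> ->; split => //; apply/imsetP; [exists (inl i) | exists (inr j)]; by rewrite ?inE.
Qed.
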